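(* Let $\mathscr{H}$ be a complex Hilbert space and let $N(\cdot)$ be a norm on $\mathbb{B}(\mathscr{H})$ which is an algebra norm ($N(XY)\leq N(X)N(Y)$ for all $X,Y\in\mathbb{B}(\mathscr{H})$) and self-adjoint ($N(X^* )=N(X)$ for all $X\in\mathbb{B}(\mathscr{H})$). Then for all $B,C\in\mathbb{B}(\mathscr{H})$, $$\frac18N(C^*C+B^*B)+\frac12\max\{w_N(B),w_N(C)\}\,|w_N(B+C)-w_N(B-C)|\leq w_{(N,e)}^2(B,C).$$
   Context: For $T\in\mathbb{B}(\mathscr{H})$: $\Re(T)=\frac12(T+T^* )$ and $w_N(T)=\sup_{\theta\in\mathbb{R}}N(\Re(e^{i\theta}T))$. For $B,C\in\mathbb{B}(\mathscr{H})$, $w_{(N,e)}(B,C)=\sup_{\lambda_1,\lambda_2\in\mathbb{C},\ |\lambda_1|^2+|\lambda_2|^2\leq 1}\sup_{\theta\in\mathbb{R}} N(\Re(e^{i\theta}(\lambda_1B+\lambda_2C)))$. *)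

(* Defs.v *)
From HB Require Import structures.
From mathcomp Require Import all_boot all_order all_algebra.
From mathcomp Require Import complex.
From mathcomp Require Import boolp classical_sets reals trigo.
From Stdlib Require Import ClassicalEpsilon.
Set Implicit Arguments. Unset Strict Implicit. Unset Printing Implicit Defensive.
Import Order.TTheory GRing.Theory Num.Theory.
Local Open Scope ring_scope.
Local Open Scope complex_scope.
Local Open Scope classical_set_scope.

Section Hilbert.
Variables (R : realType) (H : lmodType R[i]) (ip : H -> H -> R[i]).

Definition hnorm (x : H) : R := Num.sqrt (complex.Re (ip x x)).

Record is_hilbert : Prop := IsHilbert {
  ip_linear : forall (a : R[i]) (x y z : H), ip (a *: x + y) z = a * ip x z + ip y z;
  ip_conj : forall x y : H, ip y x = (ip x y)^*;
  ip_pos : forall x : H, 0 <= ip x x;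
  ip_def : forall x : H, ip x x = 0 -> x = 0;
  ip_complete : forall u : nat -> H,
    (forall e : R, 0 < e -> exists M : nat, forall m n : nat, (M <= m)%N -> (M <= n)%N ->
        hnorm (u m - u n) < e) ->
    exists l : H, forall e : R, 0 < e -> exists M : nat, forall n : nat, (M <= n)%N ->
        hnorm (u n - l) < e
}.

Definition bounded_op (T : H -> H) : Prop :=
  (forall (a : R[i]) (x y : H), T (a *: x + y) = a *: T x + T y) /\
  exists M : R, forall x : H, hnorm (T x) <= M * hnorm x.

Definition is_adjoint (T S : H -> H) : Prop := forall x y : H, ip (T x) y = ip x (S y).

Definition adjoint (T : H -> H) : H -> H :=
  epsilon (inhabits (fun x : H => x)) (fun S => is_adjoint T S).

Definition opadd (S T : H -> H) : H -> H := fun x => S x + T x.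
Definition opsub (S T : H -> H) : H -> H := fun x => S x - T x.
Definition opscale (a : R[i]) (T : H -> H) : H -> H := fun x => a *: T x.
Definition opmul (S T : H -> H) : H -> H := fun x => S (T x).

Definition opRe (T : H -> H) : H -> H := opscale (2^-1) (opadd T (adjoint T)).

Definition expi (t : R) : R[i] := Complex (cos t) (sin t).

Definition wN (N : (H -> H) -> R) (T : H -> H) : R :=
  sup [set r | exists t : R, r = N (opRe (opscale (expi t) T))].

Definition wNe (N : (H -> H) -> R) (B C : H -> H) : R :=
  sup [set r | exists (l1 l2 : R[i]) (t : R),
         `|l1| ^+ 2 + `|l2| ^+ 2 <= 1 /\
         r = N (opRe (opscale (expi t) (opadd (opscale l1 B) (opscale l2 C))))].

Record algebra_sa_norm (N : (H -> H) -> R) : Prop := AlgSANorm {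
  N_ge0 : forall X, bounded_op X -> 0 <= N X;
  N_eq0 : forall X, bounded_op X -> N X = 0 -> X = (fun _ => 0);
  N_triangle : forall X Y, bounded_op X -> bounded_op Y -> N (opadd X Y) <= N X + N Y;
  N_homog : forall (a : R[i]) X, bounded_op X -> N (opscale a X) = complex.Re `|a| * N X;
  N_submult : forall X Y, bounded_op X -> bounded_op Y -> N (opmul X Y) <= N X * N Y;
  N_selfadj : forall X, bounded_op X -> N (adjoint X) = N X
}.

End Hilbert.

(* Main.v *)
Require Import Defs.
From HB Require Import structures.
From mathcomp Require Import all_boot all_order all_algebra.
From mathcomp Require Import complex.
From mathcomp Require Import boolp classical_sets reals trigo.
From mathcomp Require Import ring lra.
From Stdlib Require Import ClassicalEpsilon.
Set Implicit Arguments. Unset Strict Implicit. Unset Printing Implicit Defensive.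
Import Order.TTheory GRing.Theory Num.Theory.
Local Open Scope ring_scope.

Section Cplx.
Variable R : realType.
Local Open Scope complex_scope.

Lemma ReD (a b : R[i]) : complex.Re (a + b) = complex.Re a + complex.Re b.
Proof. by case: a; case: b. Qed.
Lemma ImD (a b : R[i]) : complex.Im (a + b) = complex.Im a + complex.Im b.
Proof. by case: a; case: b. Qed.
Lemma ReN (a : R[i]) : complex.Re (- a) = - complex.Re a.
Proof. by case: a. Qed.
Lemma ReB (a b : R[i]) : complex.Re (a - b) = complex.Re a - complex.Re b.
Proof. by rewrite ReD ReN. Qed.
Lemma ReJ (a : R[i]) : complex.Re (conjc a) = complex.Re a.
Proof. by case: a. Qed.
Lemma Re0 : complex.Re (0 : R[i]) = 0. Proof. by []. Qed.
Lemma ReC (r : R) : complex.Re (r%:C) = r. Proof. by []. Qed.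
Lemma ImC (r : R) : complex.Im (r%:C) = 0. Proof. by []. Qed.
Lemma ReCM (r : R) (z : R[i]) : complex.Re (r%:C * z) = r * complex.Re z.
Proof. by case: z => a b /=; rewrite mul0r subr0. Qed.

Lemma Renorm (z : R[i]) :
  complex.Re `|z| = Num.sqrt (complex.Re z ^+ 2 + complex.Im z ^+ 2).
Proof. by rewrite normc_def. Qed.

Lemma normC_Re (z : R[i]) : `|z| = (complex.Re `|z|)%:C.
Proof. by rewrite normc_def. Qed.

Lemma Renorm_ge0 (z : R[i]) : 0 <= complex.Re `|z|.
Proof. by rewrite Renorm sqrtr_ge0. Qed.

Lemma RenormC (r : R) : complex.Re `|r%:C| = `|r|.
Proof. by rewrite Renorm /= expr0n /= addr0 sqrtr_sqr. Qed.

Lemma conjD (a b : R[i]) : conjc (a + b) = conjc a + conjc b.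
Proof. by case: a => ? ?; case: b => ? ? /=; rewrite opprD. Qed.
Lemma conjN (a : R[i]) : conjc (- a) = - conjc a.
Proof. by case: a. Qed.
Lemma conjM (a b : R[i]) : conjc (a * b) = conjc a * conjc b.
Proof.
case: a => a1 a2; case: b => b1 b2 /=.
by apply/eqP; rewrite eq_complex /=; apply/andP; split; apply/eqP; ring.
Qed.
End Cplx.

Section Cplx2.
Variable R : realType.
Local Open Scope complex_scope.
Lemma realC_mul (r s : R) : r%:C * s%:C = (r * s)%:C.
Proof. by apply/eqP; rewrite eq_complex /= !mulr0 !mul0r subr0 addr0 !eqxx. Qed.
Lemma conjC_real (r : R) : conjc (r%:C) = r%:C.
Proof. by rewrite /= oppr0. Qed.
Lemma realC1 : (1 : R)%:C = 1. Proof. by []. Qed.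
End Cplx2.


Section Hil.
Variables (R : realType) (H : lmodType R[i]) (ip : H -> H -> R[i]).
Hypothesis hH : is_hilbert ip.
Local Open Scope complex_scope.

Lemma ipDl x y z : ip (x + y) z = ip x z + ip y z.
Proof. by have := ip_linear hH 1 x y z; rewrite scale1r mul1r. Qed.
Lemma ip0l z : ip 0 z = 0.
Proof. have h := ipDl 0 0 z; rewrite addr0 in h.
by apply: (addrI (ip 0 z)); rewrite -h addr0. Qed.
Lemma ipZl a x z : ip (a *: x) z = a * ip x z.
Proof. by have := ip_linear hH a x 0 z; rewrite addr0 ip0l addr0. Qed.
Lemma ipC x y : ip y x = conjc (ip x y).
Proof. exact: ip_conj. Qed.
Lemma ipDr z x y : ip z (x + y) = ip z x + ip z y.
Proof. by rewrite ipC ipDl conjD -!ipC. Qed.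
Lemma ipZr z a x : ip z (a *: x) = conjc a * ip z x.
Proof. by rewrite ipC ipZl conjM -ipC. Qed.
Lemma ip0r z : ip z 0 = 0.
Proof. by rewrite ipC ip0l conjc0. Qed.
Lemma ipNl x z : ip (- x) z = - ip x z.
Proof. by rewrite -scaleN1r ipZl mulN1r. Qed.
Lemma ipNr z x : ip z (- x) = - ip z x.
Proof. by rewrite ipC ipNl conjN -ipC. Qed.
Lemma ipBl x y z : ip (x - y) z = ip x z - ip y z.
Proof. by rewrite ipDl ipNl. Qed.
Lemma ipBr z x y : ip z (x - y) = ip z x - ip z y.
Proof. by rewrite ipDr ipNr. Qed.

Definition nsq (x : H) : R := complex.Re (ip x x).

Lemma ipxx x : ip x x = (nsq x)%:C.
Proof.
rewrite /nsq; have := ip_pos hH x; case: (ip x x) => a b.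
by rewrite lecE /= => /andP [/eqP -> _].
Qed.
Lemma nsq_ge0 x : 0 <= nsq x.
Proof. by have := ip_pos hH x; rewrite lecE => /andP [_]. Qed.
Lemma nsq_eq0 x : nsq x = 0 -> x = 0.
Proof. by move=> h; apply: (ip_def hH); rewrite ipxx h. Qed.
Lemma nsq0 : nsq 0 = 0.
Proof. by rewrite /nsq ip0l. Qed.
Lemma ReipC x y : complex.Re (ip y x) = complex.Re (ip x y).
Proof. by rewrite ipC ReJ. Qed.
Lemma nsqD x y : nsq (x + y) = nsq x + nsq y + 2 * complex.Re (ip x y).
Proof.
rewrite /nsq ipDl !ipDr !ReD (ReipC x y); ring.
Qed.
Lemma nsqN x : nsq (- x) = nsq x.
Proof. by rewrite /nsq ipNl ipNr opprK. Qed.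
Lemma nsqB x y : nsq (x - y) = nsq x + nsq y - 2 * complex.Re (ip x y).
Proof. by rewrite nsqD nsqN ipNr ReN; ring. Qed.
Lemma nsqZ a x : nsq (a *: x) = (complex.Re a ^+ 2 + complex.Im a ^+ 2) * nsq x.
Proof.
rewrite /nsq ipZl ipZr ipxx; case: a => u v /=.
ring.
Qed.

Lemma hnormE x : hnorm ip x = Num.sqrt (nsq x).
Proof. by []. Qed.
Lemma hn_ge0 x : 0 <= hnorm ip x.
Proof. exact: sqrtr_ge0. Qed.
Lemma hn_sq x : hnorm ip x ^+ 2 = nsq x.
Proof. by rewrite hnormE sqr_sqrtr // nsq_ge0. Qed.

Lemma CS_re x y : complex.Re (ip x y) ^+ 2 <= nsq x * nsq y.
Proof.
case: (eqVneq (nsq x) 0) => [/nsq_eq0 -> | nx].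
  by rewrite ip0l nsq0 mul0r expr0n.
have a0 : 0 < nsq x by rewrite lt_neqAle eq_sym nx nsq_ge0.
set c := complex.Re (ip x y).
set t := - c / nsq x.
have ht : t * nsq x = - c by rewrite /t -mulrA mulVf // mulr1.
have := nsq_ge0 (t%:C *: x + y).
rewrite nsqD nsqZ ipZl ReCM ReC ImC -/c => h.
have := mulr_ge0 (ltW a0) h.
have -> : nsq x * ((t ^+ 2 + 0 ^+ 2) * nsq x + nsq y + 2 * (t * c))
   = (t * nsq x) ^+ 2 + nsq x * nsq y + 2 * (t * nsq x) * c by ring.
rewrite ht => h2; lra.
Qed.

Lemma sq_le_pos (a b : R) : 0 <= b -> a ^+ 2 <= b ^+ 2 -> a <= b.
Proof. move=> hb h; nra. Qed.

Lemma Reip_le x y : complex.Re (ip x y) <= hnorm ip x * hnorm ip y.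
Proof.
apply: sq_le_pos; first by rewrite mulr_ge0 // hn_ge0.
by rewrite exprMn !hn_sq CS_re.
Qed.

Lemma Reip_abs x y : `|complex.Re (ip x y)| <= hnorm ip x * hnorm ip y.
Proof.
have h1 := Reip_le x y.
have h2 := Reip_le (- x) y.
rewrite ipNl ReN /hnorm /nsq ipNl ipNr opprK -/(hnorm ip x) in h2.
by rewrite ler_norml h1 andbT lerNl.
Qed.

Lemma hn_triangle x y : hnorm ip (x + y) <= hnorm ip x + hnorm ip y.
Proof.
apply: sq_le_pos; first by rewrite addr_ge0 // hn_ge0.
rewrite hn_sq nsqD sqrrD !hn_sq.
have := Reip_le x y; lra.
Qed.

Lemma hn_lt_nsq v e : 0 < e -> hnorm ip v < Num.sqrt e -> nsq v < e.
Proof.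
move=> e0 h; rewrite -hn_sq -(sqr_sqrtr (ltW e0)).
have := hn_ge0 v; nra.
Qed.

Lemma nsq_lt_hn v e : 0 < e -> nsq v < e ^+ 2 -> hnorm ip v < e.
Proof.
move=> e0; rewrite -hn_sq => h; have := hn_ge0 v; nra.
Qed.

Lemma ip_ext_r u v : (forall x, ip x u = ip x v) -> u = v.
Proof.
move=> h; apply/eqP; rewrite -subr_eq0; apply/eqP; apply: (ip_def hH).
by rewrite ipBr h subrr.
Qed.

End Hil.


Section Riesz.
Variables (R : realType) (H : lmodType R[i]) (ip : H -> H -> R[i]).
Hypothesis hH : is_hilbert ip.
Local Open Scope complex_scope.

Lemma eps_le (a b K : R) : 0 <= K ->
  (forall e, 0 < e -> e <= 1 -> a <= b + e * K) -> a <= b.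
Proof.
move=> K0 h; rewrite leNgt; apply/negP => hab.
have g0 : 0 < a - b by rewrite subr_gt0.
set g := a - b in g0.
have d0 : 0 < K + 1 + g by lra.
set e := g / (K + 1 + g).
have e0 : 0 < e by rewrite divr_gt0.
have e1 : e <= 1 by rewrite /e ler_pdivrMr // mul1r; lra.
have eK : e * K < g by rewrite /e mulrAC ltr_pdivrMr //; nra.
have := h e e0 e1; rewrite /g in eK; lra.
Qed.

Lemma lim0 (a K : R) : 0 <= K -> (forall e, 0 < e -> a <= K * e) -> a <= 0.
Proof.
move=> K0 h; rewrite leNgt; apply/negP => a0.
have d0 : 0 < K + 1 by lra.
have := h (a / (K + 1)) (divr_gt0 a0 d0).
rewrite mulrA ler_pdivlMr //; nra.
Qed.

Definition ivn (n : nat) : R := (n.+1%:R)^-1.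

Lemma ivn_gt0 n : 0 < ivn n.
Proof. by rewrite /ivn invr_gt0 ltr0n. Qed.

Lemma ivn_le1 n : ivn n <= 1.
Proof. by rewrite /ivn invf_le1 ?ltr0n // ler1n. Qed.

Lemma inv_small (e : R) : 0 < e -> exists M : nat, forall n, (M <= n)%N -> ivn n < e.
Proof.
move=> e0; rewrite /ivn; exists (Num.Def.archi_bound (e^-1)) => n hn.
have ei : 0 <= e^-1 by rewrite invr_ge0 ltW.
have h1 := archi_boundP ei.
have h2 : ((Num.Def.archi_bound e^-1)%:R : R) <= n.+1%:R.
  by rewrite ler_nat; apply: leq_trans hn _.
have hp : (0 : R) < n.+1%:R by rewrite ltr0n.
have ee : e * e^-1 = 1 by rewrite mulfV // gt_eqF.
rewrite -(ltr_pM2r hp) mulVf ?gt_eqF //; nra.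
Qed.

Lemma riesz (f : H -> R[i]) (K : R) : 0 <= K ->
  (forall a x y, f (a *: x + y) = a * f x + f y) ->
  (forall v, complex.Re (f v) ^+ 2 <= K * nsq ip v) ->
  (forall v, complex.Im (f v) ^+ 2 <= K * nsq ip v) ->
  exists z, forall x, f x = ip x z.
Proof.
move=> K0 flin fRe fIm.
have f0 : f 0 = 0.
  have := flin 1 0 0; rewrite scaler0 addr0 mul1r => h.
  by apply: (addrI (f 0)); rewrite -h addr0.
have fD x y : f (x + y) = f x + f y by have := flin 1 x y; rewrite scale1r mul1r.
have fZ a x : f (a *: x) = a * f x by have := flin a x 0; rewrite addr0 f0 addr0.
have fB x y : f (x - y) = f x - f y.
  by have := flin (-1) y x; rewrite scaleN1r mulN1r [- y + x]addrC [- f y + _]addrC.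
case: (pselect (forall x, f x = 0)) => [fz | ].
  by exists 0 => x; rewrite (ip0r hH) fz.
move=> /existsNP [x0 /eqP fx0].
pose S := fun r : R => exists x, f x = 1 /\ r = nsq ip x.
have x1A : f ((f x0)^-1 *: x0) = 1 by rewrite fZ mulVf.
have S0 : (S !=set0)%classic by exists (nsq ip ((f x0)^-1 *: x0)); exists ((f x0)^-1 *: x0).
have Slb : has_lbound S by exists 0 => r [x [_ ->]]; exact: nsq_ge0.
have hinf : has_inf S by split.
pose d2 := inf S.
have d2le x : f x = 1 -> d2 <= nsq ip x by move=> fx; apply: (ge_inf Slb); exists x.
have d2ge0 : 0 <= d2 by apply: lb_le_inf => // r [x [_ ->]]; exact: nsq_ge0.
have seq_ex : forall n : nat, exists x, f x = 1 /\ nsq ip x < d2 + ivn n.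
  move=> n; have e0 := ivn_gt0 n.
  by have [r [x [fx ->]] hr] := inf_adherent e0 hinf; exists x.
have [u hu] := @boolp.choice _ _ _ seq_ex.
clearbody d2.
have para a b : nsq ip (a - b) + nsq ip (a + b) = 2 * nsq ip a + 2 * nsq ip b.
  by rewrite (nsqB hH) (nsqD hH); ring.
have mid a b : f a = 1 -> f b = 1 -> 4 * d2 <= nsq ip (a + b).
  move=> fa fb; pose m := (2^-1 : R[i]) *: (a + b).
  have fm : f m = 1.
    by rewrite fZ fD fa fb; field.
  have em : m + m = a + b.
    by rewrite -scalerDl (_ : (2^-1 + 2^-1 : R[i]) = 1) ?scale1r //; field.
  have -> : nsq ip (a + b) = nsq ip (m + m) by rewrite em.
  rewrite (nsqD hH) -/(nsq ip m).
  have := d2le _ fm; lra.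
have cauchy n m : nsq ip (u n - u m) <= 2 * ivn n + 2 * ivn m.
  have gen a b (ea eb : R) : f a = 1 -> f b = 1 -> nsq ip a < d2 + ea ->
      nsq ip b < d2 + eb -> nsq ip (a - b) <= 2 * ea + 2 * eb.
    move=> fa fb ha hb; have := para a b; have := mid _ _ fa fb; lra.
  by have [fn hn] := hu n; have [fm hm] := hu m; apply: gen.
have ucauchy : forall e : R, 0 < e -> exists M : nat, forall m n : nat,
    (M <= m)%N -> (M <= n)%N -> hnorm ip (u m - u n) < e.
  move=> e e0; have e40 : 0 < e ^+ 2 / 4 by rewrite divr_gt0 // exprn_gt0.
  have [M hM] := inv_small e40.
  exists M => m n hm hn; apply: (nsq_lt_hn hH) => //.
  have := cauchy m n; have := hM m hm; have := hM n hn; lra.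
have [p hp] := ip_complete hH ucauchy.
have plim : forall e : R, 0 < e -> exists M : nat, forall n, (M <= n)%N -> nsq ip (u n - p) < e.
  move=> e e0; have se : 0 < Num.sqrt e by rewrite sqrtr_gt0.
  have [M hM] := hp _ se.
  by exists M => n hn; apply: (hn_lt_nsq hH) => //; exact: hM.
have fp : f p = 1.
  pose c := 1 - f p.
  have hc n : f (u n - p) = c by rewrite fB (hu n).1.
  have hRe : complex.Re c ^+ 2 <= 0.
    apply: (lim0 K0) => e e0; have [M hM] := plim e e0.
    rewrite -(hc M); apply: le_trans (fRe _) _; apply: ler_wpM2l => //.
    exact: ltW (hM M (leqnn M)).
  have hIm : complex.Im c ^+ 2 <= 0.
    apply: (lim0 K0) => e e0; have [M hM] := plim e e0.
    rewrite -(hc M); apply: le_trans (fIm _) _; apply: ler_wpM2l => //.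
    exact: ltW (hM M (leqnn M)).
  have cz (z : R[i]) : complex.Re z ^+ 2 <= 0 -> complex.Im z ^+ 2 <= 0 -> z = 0.
    case: z => a b /= ha hb.
    apply/eqP; rewrite eq_complex /=; apply/andP; split; apply/eqP; nra.
  have := cz c hRe hIm.
  by move/eqP; rewrite subr_eq0 => /eqP <-.
have pmin : nsq ip p <= d2.
  pose D := Num.sqrt (d2 + 1).
  have D0 : 0 <= D := sqrtr_ge0 _.
  apply: (@eps_le _ _ (2 + 2 * D)); first lra.
  move=> e e0 e1.
  have [M1 hM1] := inv_small e0.
  have [M2 hM2] := plim (e ^+ 2) (exprn_gt0 _ e0).
  pose n := maxn M1 M2.
  have hn1 := hM1 n (leq_maxl _ _).
  have hn2 := hM2 n (leq_maxr _ _).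
  have [fun_ hun] := hu n.
  have -> : p = u n + (p - u n) by rewrite addrCA subrr addr0.
  rewrite (nsqD hH).
  have hr := Reip_le hH (u n) (p - u n).
  have hinv1 := ivn_le1 n.
  have hD : hnorm ip (u n) <= D.
    by rewrite hnormE ler_wsqrtr //; lra.
  have hq : nsq ip (p - u n) = nsq ip (u n - p) by rewrite -(nsqN hH) opprB.
  have he : hnorm ip (p - u n) <= e.
    by apply: ltW; apply: (nsq_lt_hn hH) => //; rewrite hq.
  have hprod : hnorm ip (u n) * hnorm ip (p - u n) <= D * e.
    by apply: ler_pM => //; apply: hn_ge0.
  have e2 : e ^+ 2 <= e by nra.
  rewrite hq; lra.
have orth k : f k = 0 -> ip k p = 0.
  move=> fk; pose q := ip k p.
  have nk := nsq_ge0 hH k.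
  pose t := (nsq ip k + 1)^-1.
  have t0 : 0 < t by rewrite invr_gt0; lra.
  have tk : t * nsq ip k < 1.
    by rewrite /t mulrC ltr_pdivrMr; lra.
  pose s := - (t%:C * conjc q).
  have fps : f (p + s *: k) = 1 by rewrite fD fZ fk mulr0 addr0 fp.
  have := d2le _ fps.
  rewrite (nsqD hH) (nsqZ hH) (ipZr hH) (ipC hH k p) -/q.
  have e1 (z : R[i]) : complex.Re (- (t%:C * conjc z)) ^+ 2 + complex.Im (- (t%:C * conjc z)) ^+ 2
      = t ^+ 2 * (complex.Re z ^+ 2 + complex.Im z ^+ 2).
    by case: z => a b /=; ring.
  have e2 (z : R[i]) : complex.Re (conjc (- (t%:C * conjc z)) * conjc z) = - t * (complex.Re z ^+ 2 + complex.Im z ^+ 2).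
    by case: z => a b /=; ring.
  rewrite /s e1 e2 => h.
  have hQ : complex.Re q ^+ 2 + complex.Im q ^+ 2 <= 0.
    set Q := complex.Re q ^+ 2 + complex.Im q ^+ 2 in h *.
    have Q0 : 0 <= Q by rewrite addr_ge0 // sqr_ge0.
    have : 0 <= t * Q * (t * nsq ip k - 2) by nra.
    move=> h3; have h4 : 0 <= Q * (t * nsq ip k - 2) by rewrite -(pmulr_rge0 _ t0) mulrA.
    nra.
  move: hQ; rewrite /q; case: (ip k p) => a b /= hQ.
  apply/eqP; rewrite eq_complex /=; apply/andP; split; apply/eqP; nra.
have np : nsq ip p != 0.
  apply/eqP => /(nsq_eq0 hH) p0; move: fp; rewrite p0 f0 => /eqP.
  by rewrite eq_sym oner_eq0.
exists (((nsq ip p)^-1)%:C *: p) => x.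
have h := orth (x - f x *: p).
rewrite fB fZ fp mulr1 subrr in h.
have {}h := h erefl.
rewrite (ipBl hH) (ipZl hH) (ipxx hH) in h.
move/eqP: h; rewrite subr_eq0 => /eqP h.
by rewrite (ipZr hH) conjC_real h mulrCA realC_mul mulVf // mulr1.
Qed.

End Riesz.


Section Ops.
Variables (R : realType) (H : lmodType R[i]) (ip : H -> H -> R[i]).
Hypothesis hH : is_hilbert ip.
Local Open Scope complex_scope.

Notation bnd := (bounded_op ip).

Lemma bnd_pos T : bnd T -> exists M, 0 <= M /\ forall x, hnorm ip (T x) <= M * hnorm ip x.
Proof.
case=> _ [M hM]; exists (Num.max M 0); split; first by rewrite le_max lexx orbT.
move=> x; apply: le_trans (hM x) _; apply: ler_wpM2r; first exact: hn_ge0.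
by rewrite le_max lexx.
Qed.

Lemma bnd_lin T : bnd T -> forall a x y, T (a *: x + y) = a *: T x + T y.
Proof. by case. Qed.

Lemma bnd0 T : bnd T -> T 0 = 0.
Proof.
move=> bT; have := bnd_lin bT 1 0 0; rewrite scaler0 addr0 scale1r => h.
by apply: (addrI (T 0)); rewrite -h addr0.
Qed.

Lemma bndD T : bnd T -> forall x y, T (x + y) = T x + T y.
Proof. by move=> bT x y; have := bnd_lin bT 1 x y; rewrite !scale1r. Qed.

Lemma bndZ T : bnd T -> forall a x, T (a *: x) = a *: T x.
Proof. by move=> bT a x; have := bnd_lin bT a x 0; rewrite !addr0 bnd0 // addr0. Qed.

Lemma bndN T : bnd T -> forall x, T (- x) = - T x.
Proof. by move=> bT x; rewrite -scaleN1r bndZ // scaleN1r. Qed.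

Lemma bndB T : bnd T -> forall x y, T (x - y) = T x - T y.
Proof. by move=> bT x y; rewrite bndD // bndN. Qed.

Lemma nsq_bound T : bnd T -> exists M, 0 <= M /\ forall x, nsq ip (T x) <= M ^+ 2 * nsq ip x.
Proof.
move=> bT; have [M [M0 hM]] := bnd_pos bT; exists M; split => // x.
rewrite -!(hn_sq hH) -exprMn; have := hM x; have := hn_ge0 ip (T x); nra.
Qed.

Lemma ReJi (z : R[i]) : complex.Re (conjc 'i * z) = complex.Im z.
Proof. by case: z => a b /=; ring. Qed.

Lemma nsq_i y : nsq ip ('i *: y) = nsq ip y.
Proof. by rewrite (nsqZ hH) /=; ring. Qed.

Lemma adj_ex T : bnd T -> exists S, is_adjoint ip T S.
Proof.
move=> bT; have [M [M0 hM]] := nsq_bound bT.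
have h y : exists z, forall x, ip (T x) y = ip x z.
  apply: (riesz hH (K := M ^+ 2 * nsq ip y)).
  - by rewrite mulr_ge0 ?sqr_ge0 ?nsq_ge0.
  - by move=> a x x'; rewrite (bnd_lin bT) (ipDl hH) (ipZl hH).
  - move=> v; apply: le_trans (CS_re hH (T v) y) _.
    have := hM v; have := nsq_ge0 hH y; have := nsq_ge0 hH (T v); nra.
  - move=> v; rewrite -ReJi -(ipZr hH).
    apply: le_trans (CS_re hH (T v) _) _; rewrite nsq_i.
    have := hM v; have := nsq_ge0 hH y; have := nsq_ge0 hH (T v); nra.
have [S hS] := @boolp.choice _ _ _ h.
by exists S => x y; exact: hS y x.
Qed.

Lemma adj_spec T : bnd T -> is_adjoint ip T (adjoint ip T).
Proof. by move=> bT; rewrite /adjoint; apply: epsilon_spec; exact: adj_ex. Qed.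

Lemma adj_eq T S : bnd T -> is_adjoint ip T S -> adjoint ip T = S.
Proof.
move=> bT hS; apply: funext => y; apply: (ip_ext_r hH) => x.
by rewrite -(adj_spec bT) hS.
Qed.

Lemma adj_bnd T : bnd T -> bnd (adjoint ip T).
Proof.
move=> bT; have hA := adj_spec bT; split.
  move=> a y y'; apply: (ip_ext_r hH) => x.
  by rewrite -hA (ipDr hH) (ipZr hH) (ipDr hH) (ipZr hH) !hA.
have [M [M0 hM]] := bnd_pos bT; exists M => y.
set A := adjoint ip T.
have h1 : nsq ip (A y) <= hnorm ip (T (A y)) * hnorm ip y.
  by rewrite /nsq -hA; apply: Reip_le.
have h2 := hM (A y).
rewrite -(hn_sq hH) in h1.
have h3 : hnorm ip (T (A y)) * hnorm ip y <= M * hnorm ip (A y) * hnorm ip y.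
  by apply: ler_wpM2r => //; exact: hn_ge0.
have h4 := le_trans h1 h3.
move: h4; set a := hnorm ip (A y); set c := hnorm ip y => h4.
have a0 : 0 <= a := hn_ge0 ip _; have c0 : 0 <= c := hn_ge0 ip _.
rewrite leNgt; apply/negP => hlt.
have : M * c * a < a * a by rewrite ltr_pM2r //; apply: le_lt_trans hlt; rewrite mulr_ge0.
nra.
Qed.

Lemma bnd_add X Y : bnd X -> bnd Y -> bnd (opadd X Y).
Proof.
move=> bX bY; split.
  by move=> a x y; rewrite /opadd (bnd_lin bX) (bnd_lin bY) scalerDr addrACA.
have [M1 [M10 h1]] := bnd_pos bX; have [M2 [M20 h2]] := bnd_pos bY.
exists (M1 + M2) => x; rewrite /opadd.
apply: le_trans (hn_triangle hH _ _) _.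
have := h1 x; have := h2 x; lra.
Qed.

Lemma hnZ a v : hnorm ip (a *: v) = Num.sqrt (complex.Re a ^+ 2 + complex.Im a ^+ 2) * hnorm ip v.
Proof.
by rewrite !hnormE (nsqZ hH) sqrtrM // addr_ge0 // sqr_ge0.
Qed.

Lemma bnd_scale a X : bnd X -> bnd (opscale a X).
Proof.
move=> bX; split.
  by move=> b x y; rewrite /opscale (bnd_lin bX) scalerDr !scalerA mulrC.
have [M [M0 h]] := bnd_pos bX.
exists (Num.sqrt (complex.Re a ^+ 2 + complex.Im a ^+ 2) * M) => x.
rewrite /opscale hnZ -mulrA; apply: ler_wpM2l; first exact: sqrtr_ge0.
exact: h.
Qed.

Lemma bnd_mul X Y : bnd X -> bnd Y -> bnd (opmul X Y).
Proof.
move=> bX bY; split.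
  by move=> a x y; rewrite /opmul (bnd_lin bY) (bnd_lin bX).
have [M1 [M10 h1]] := bnd_pos bX; have [M2 [M20 h2]] := bnd_pos bY.
exists (M1 * M2) => x; rewrite /opmul.
apply: le_trans (h1 _) _; rewrite -mulrA; apply: ler_wpM2l => //; exact: h2.
Qed.

Lemma opsubE (X Y : H -> H) : opsub X Y = opadd X (opscale (-1) Y).
Proof. by apply: funext => x; rewrite /opsub /opadd /opscale scaleN1r. Qed.

Lemma bnd_sub X Y : bnd X -> bnd Y -> bnd (opsub X Y).
Proof. by move=> bX bY; rewrite opsubE; apply: bnd_add => //; apply: bnd_scale. Qed.

Lemma bnd_Re X : bnd X -> bnd (opRe ip X).
Proof. by move=> bX; apply: bnd_scale; apply: bnd_add => //; apply: adj_bnd. Qed.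

Lemma adj_add X Y : bnd X -> bnd Y ->
  adjoint ip (opadd X Y) = opadd (adjoint ip X) (adjoint ip Y).
Proof.
move=> bX bY; apply: adj_eq; first exact: bnd_add.
move=> x y; rewrite /opadd (ipDl hH) (ipDr hH).
by rewrite (adj_spec bX) (adj_spec bY).
Qed.

Lemma adj_scale a X : bnd X ->
  adjoint ip (opscale a X) = opscale (conjc a) (adjoint ip X).
Proof.
move=> bX; apply: adj_eq; first exact: bnd_scale.
move=> x y; rewrite /opscale (ipZl hH) (ipZr hH) (adj_spec bX).
by case: a => ? ? /=; rewrite opprK.
Qed.

Lemma adj_sub X Y : bnd X -> bnd Y ->
  adjoint ip (opsub X Y) = opsub (adjoint ip X) (adjoint ip Y).
Proof.
move=> bX bY; apply: adj_eq; first exact: bnd_sub.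
move=> x y; rewrite /opsub (ipBl hH) (ipBr hH).
by rewrite (adj_spec bX) (adj_spec bY).
Qed.

End Ops.


Section Scal.
Variable R : realType.
Local Open Scope complex_scope.
Lemma halfC : (2^-1 : R[i]) = (2^-1 : R)%:C.
Proof. by rewrite fmorphV rmorph_nat. Qed.
Lemma twoC : (2 : R[i]) = (2 : R)%:C.
Proof. by rewrite rmorph_nat. Qed.
Lemma Renorm_half : complex.Re `|(2^-1 : R[i])| = 2^-1.
Proof. by rewrite halfC RenormC ger0_norm // invr_ge0. Qed.
Lemma Renorm_two : complex.Re `|(2 : R[i])| = 2.
Proof. by rewrite twoC RenormC ger0_norm. Qed.
Lemma Renorm_N1 : complex.Re `|(-1 : R[i])| = 1.
Proof. by rewrite normrN normr1. Qed.
Lemma Renorm_Ni : complex.Re `|(- 'i : R[i])| = 1.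
Proof. by rewrite Renorm /= oppr0 expr0n /= add0r sqrrN expr1n sqrtr1. Qed.
Lemma Renorm_expi (t : R) : complex.Re `|expi t| = 1.
Proof. by rewrite Renorm /= cos2Dsin2 sqrtr1. Qed.
Lemma expi0 : expi (0 : R) = 1.
Proof. by rewrite /expi cos0 sin0. Qed.
Lemma expi_pihalf : expi (pi / 2 : R) = 'i.
Proof.
by rewrite /expi cos_pihalf -[pi / 2]add0r sinDpihalf cos0.
Qed.
Lemma realC_add (a b : R) : a%:C + b%:C = (a + b)%:C.
Proof. by apply/eqP; rewrite eq_complex /= addr0 !eqxx. Qed.
Lemma realC_sqr (a : R) : a%:C ^+ 2 = (a ^+ 2)%:C.
Proof. by rewrite !expr2 realC_mul. Qed.
End Scal.

Section NLem.
Variables (R : realType) (H : lmodType R[i]) (ip : H -> H -> R[i]).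
Hypothesis hH : is_hilbert ip.
Variable N : (H -> H) -> R.
Hypothesis hN : algebra_sa_norm ip N.
Local Open Scope complex_scope.
Notation bnd := (bounded_op ip).

Lemma NRe_le X : bnd X -> N (opRe ip X) <= N X.
Proof.
move=> bX; rewrite /opRe (N_homog hN); last by apply: bnd_add => //; apply: adj_bnd.
rewrite Renorm_half.
have := N_triangle hN bX (adj_bnd hH bX); rewrite (N_selfadj hN bX); lra.
Qed.

Lemma Nexpi X t : bnd X -> N (opscale (expi t) X) = N X.
Proof. by move=> bX; rewrite (N_homog hN) // Renorm_expi mul1r. Qed.

Lemma wN_ub T t : bnd T -> N (opRe ip (opscale (expi t) T)) <= wN ip N T.
Proof.
move=> bT; rewrite /wN; apply: ub_le_sup; last by exists t.
exists (N T) => r [t' ->]; rewrite -(Nexpi t' bT); apply: NRe_le.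
exact: bnd_scale.
Qed.

Lemma wN_le T c : bnd T -> (forall t, N (opRe ip (opscale (expi t) T)) <= c) -> wN ip N T <= c.
Proof.
move=> bT h; rewrite /wN; apply: ge_sup.
  by exists (N (opRe ip (opscale (expi 0) T))); exists 0.
by move=> r [t ->].
Qed.

Lemma wN_ge0 T : bnd T -> 0 <= wN ip N T.
Proof.
move=> bT; apply: le_trans (wN_ub 0 bT).
by apply: (N_ge0 hN); apply: bnd_Re => //; apply: bnd_scale.
Qed.

Lemma comb2 (u v : H) (a b c d : R[i]) :
  a *: u + b *: v + (c *: u + d *: v) = (a + c) *: u + (b + d) *: v.
Proof. by rewrite addrACA !scalerDl. Qed.

Lemma NT_le T : bnd T -> N T <= 2 * wN ip N T.
Proof.
move=> bT.
pose P := opRe ip (opscale (expi 0) T).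
pose Q := opRe ip (opscale (expi (pi / 2)) T).
have bP : bnd P by apply: bnd_Re => //; apply: bnd_scale.
have bQ : bnd Q by apply: bnd_Re => //; apply: bnd_scale.
have eT : T = opadd P (opscale (- 'i) Q).
  apply: funext => x.
  rewrite /opadd /opscale /P /Q /opRe !(adj_scale hH) // /opadd /opscale.
  rewrite expi0 expi_pihalf !scalerDr !scalerA comb2 halfC.
  rewrite [X in X *: T x](_ : _ = 1); last first.
    by apply/eqP; rewrite eq_complex /=; apply/andP; split; apply/eqP; field.
  rewrite [X in X *: adjoint ip T x](_ : _ = 0); last first.
    by apply/eqP; rewrite eq_complex /=; apply/andP; split; apply/eqP; field.
  by rewrite scale1r scale0r addr0.
have h := N_triangle hN bP (bnd_scale hH (- 'i) bQ).
rewrite (N_homog hN) // Renorm_Ni mul1r -eT in h.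
have := wN_ub 0 bT; have := wN_ub (pi / 2) bT; rewrite -/P -/Q; lra.
Qed.

Lemma N_adjmul X : bnd X -> N (opmul (adjoint ip X) X) <= N X ^+ 2.
Proof.
move=> bX; apply: le_trans (N_submult hN (adj_bnd hH bX) bX) _.
by rewrite (N_selfadj hN bX) expr2.
Qed.

Lemma N_sub X Y : bnd X -> bnd Y -> N (opsub X Y) <= N X + N Y.
Proof.
move=> bX bY; rewrite opsubE; apply: le_trans (N_triangle hN bX (bnd_scale hH _ bY)) _.
by rewrite (N_homog hN) // Renorm_N1 mul1r.
Qed.

End NLem.


Section Zid.
Variables (R : realType) (H : lmodType R[i]).
Lemma two_scale (u : H) : (2 : R[i]) *: u = u + u.
Proof. by rewrite scaler_nat mulr2n. Qed.
Lemma zid_add (u v : H) : (u + v) + (u - v) = (2 : R[i]) *: u.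
Proof. by rewrite two_scale addrACA subrr addr0. Qed.
Lemma zid_sub (u v : H) : (u + v) - (u - v) = (2 : R[i]) *: v.
Proof. by rewrite two_scale opprB (addrC v (- u)) addrACA subrr add0r. Qed.
Lemma zid_sq (p1 p2 p3 p4 : H) :
  (2 : R[i]) *: (p4 + p1) = p1 + p2 + (p3 + p4) + (p1 - p2 - (p3 - p4)).
Proof.
rewrite opprB (addrACA (p1 + p2)) zid_add (addrC p3 p4) zid_add.
by rewrite scalerDr addrC.
Qed.
Lemma zlin (a b c d : H) :
  (a + b + (c + d)) + (a - b + (c - d)) = (2 : R[i]) *: (a + c).
Proof. by rewrite (addrACA a b c d) (addrACA a (- b) c (- d)) -opprD zid_add. Qed.
Lemma zlin' (a b c d : H) :
  (a + b + (c + d)) - (a - b + (c - d)) = (2 : R[i]) *: (b + d).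
Proof. by rewrite (addrACA a b c d) (addrACA a (- b) c (- d)) -opprD zid_sub. Qed.
End Zid.

Section Main.
Variables (R : realType) (H : lmodType R[i]) (ip : H -> H -> R[i]).
Hypothesis hH : is_hilbert ip.
Variable N : (H -> H) -> R.
Hypothesis hN : algebra_sa_norm ip N.
Local Open Scope complex_scope.
Notation bnd := (bounded_op ip).

Lemma opRe_real (r : R) X : bnd X -> opRe ip (opscale r%:C X) = opscale r%:C (opRe ip X).
Proof.
move=> bX; apply: funext => x.
rewrite /opRe (adj_scale hH) // /opscale /opadd conjC_real !scalerDr !scalerA.
by rewrite [2^-1 * _]mulrC.
Qed.

Lemma opscaleC a b (X : H -> H) : opscale a (opscale b X) = opscale b (opscale a X).
Proof. by apply: funext => x; rewrite /opscale !scalerA mulrC. Qed.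

Lemma lam_le1 (l1 l2 : R[i]) : `|l1| ^+ 2 + `|l2| ^+ 2 <= 1 ->
  complex.Re `|l1| <= 1 /\ complex.Re `|l2| <= 1.
Proof.
rewrite (normC_Re l1) (normC_Re l2) !realC_sqr realC_add -realC1 lecR => h.
have := Renorm_ge0 l1; have := Renorm_ge0 l2; split; nra.
Qed.

Lemma wNe_elem B C l1 l2 t : bnd B -> bnd C -> `|l1| ^+ 2 + `|l2| ^+ 2 <= 1 ->
  N (opRe ip (opscale (expi t) (opadd (opscale l1 B) (opscale l2 C)))) <= wNe ip N B C.
Proof.
move=> bB bC hl; rewrite /wNe; apply: ub_le_sup; last by exists l1, l2, t.
exists (N B + N C) => r [m1 [m2 [s [hc ->]]]].
have bS : bnd (opadd (opscale m1 B) (opscale m2 C)).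
  by apply: (bnd_add hH); apply: (bnd_scale hH).
apply: le_trans (NRe_le hH hN (bnd_scale hH _ bS)) _.
rewrite (Nexpi hN) //.
apply: le_trans (N_triangle hN (bnd_scale hH _ bB) (bnd_scale hH _ bC)) _.
rewrite !(N_homog hN) //.
have [h1 h2] := lam_le1 hc.
have := N_ge0 hN bB; have := N_ge0 hN bC.
have := Renorm_ge0 m1; have := Renorm_ge0 m2; nra.
Qed.

Lemma final_arith (n a b W mB mC s : R) :
  0 <= a -> 0 <= b -> 0 <= s -> s ^+ 2 = 2 ->
  n <= 2 * (a ^+ 2 + b ^+ 2) -> a <= s * W -> b <= s * W ->
  2 * mB <= a + b -> 2 * mC <= a + b ->
  8^-1 * n + 2^-1 * Num.max mB mC * `|a - b| <= W ^+ 2.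
Proof.
move=> a0 b0 s0 s2 hn ha hb hB hC.
have hm : 2 * Num.max mB mC <= a + b.
  by case: (leP mB mC) => _; lra.
have sW : (s * W) ^+ 2 = 2 * W ^+ 2 by rewrite exprMn s2.
have ha2 : a ^+ 2 <= 2 * W ^+ 2 by rewrite -sW; nra.
have hb2 : b ^+ 2 <= 2 * W ^+ 2 by rewrite -sW; nra.
set m := Num.max mB mC in hm *.
case: (leP b a) => hab.
  rewrite ger0_norm ?subr_ge0 //.
  have : m * (a - b) <= (a + b) / 2 * (a - b).
    by apply: ler_wpM2r; [rewrite subr_ge0 | lra].
  nra.
rewrite ltr0_norm ?subr_lt0 //.
have : m * (- (a - b)) <= (a + b) / 2 * (- (a - b)).
  by apply: ler_wpM2r; [rewrite oppr_ge0 subr_le0 ltW | lra].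
nra.
Qed.

End Main.

Section Comb.
Variables (R : realType) (H : lmodType R[i]).
Lemma re_comb (e e' : R[i]) (b c b' c' : H) :
  (2^-1 : R[i]) *: (e *: (b + c) + e' *: (b' + c')) + 2^-1 *: (e *: (b - c) + e' *: (b' - c'))
  = (2 : R[i]) *: (2^-1 *: (e *: b + e' *: b')).
Proof.
rewrite -scalerDr (scalerDr e b c) (scalerDr e' b') (scalerBr e b c) (scalerBr e' b').
by rewrite zlin !scalerA mulrC.
Qed.
Lemma re_comb' (e e' : R[i]) (b c b' c' : H) :
  (2^-1 : R[i]) *: (e *: (b + c) + e' *: (b' + c')) - 2^-1 *: (e *: (b - c) + e' *: (b' - c'))
  = (2 : R[i]) *: (2^-1 *: (e *: c + e' *: c')).
Proof.
rewrite -scalerBr (scalerDr e b c) (scalerDr e' b') (scalerBr e b c) (scalerBr e' b').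
by rewrite zlin' !scalerA mulrC.
Qed.
End Comb.


Unset Implicit Arguments.

Theorem theorem2p14 (R : realType) (H : lmodType R[i]) (ip : H -> H -> R[i])
  (hH : is_hilbert ip) (N : (H -> H) -> R) (hN : algebra_sa_norm ip N)
  (B C : H -> H) (hB : bounded_op ip B) (hC : bounded_op ip C) :
  8^-1 * N (opadd (opmul (adjoint ip C) C) (opmul (adjoint ip B) B))
  + 2^-1 * Num.max (wN ip N B) (wN ip N C)
      * `|wN ip N (opadd B C) - wN ip N (opsub B C)|
  <= wNe ip N B C ^+ 2.
Proof.
have bP := bnd_add hH hB hC.
have bQ := bnd_sub hH hB hC.
have a0 := wN_ge0 hH hN bP.
have b0 := wN_ge0 hH hN bQ.
have hn : N (opadd (opmul (adjoint ip C) C) (opmul (adjoint ip B) B))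
    <= 2 * (wN ip N (opadd B C) ^+ 2 + wN ip N (opsub B C) ^+ 2).
  set Z := opadd (opmul (adjoint ip C) C) (opmul (adjoint ip B) B).
  have bZ : bounded_op ip Z.
    rewrite /Z; apply: (bnd_add hH); apply: bnd_mul => //; exact: (adj_bnd hH).
  have eZ : opscale 2 Z = opadd (opmul (adjoint ip (opadd B C)) (opadd B C))
                                (opmul (adjoint ip (opsub B C)) (opsub B C)).
    apply: funext => x.
    rewrite (adj_add hH hB hC) (adj_sub hH hB hC) /Z /opscale /opadd /opmul /opsub.
    rewrite !(bndD (adj_bnd hH hB)) !(bndD (adj_bnd hH hC)).
    rewrite !(bndN (adj_bnd hH hB)) !(bndN (adj_bnd hH hC)).
    exact: zid_sq.
  have h1 : N (opscale 2 Z) = 2 * N Z by rewrite (N_homog hN) // Renorm_two.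
  have h2 := N_triangle hN (bnd_mul (adj_bnd hH bP) bP) (bnd_mul (adj_bnd hH bQ) bQ).
  rewrite -eZ h1 in h2.
  have h3 := N_adjmul hH hN bP; have h4 := N_adjmul hH hN bQ.
  have h5 := NT_le hH hN bP; have h6 := NT_le hH hN bQ.
  have := N_ge0 hN bP; have := N_ge0 hN bQ; nra.
have hBm : 2 * wN ip N B <= wN ip N (opadd B C) + wN ip N (opsub B C).
  suff : wN ip N B <= (wN ip N (opadd B C) + wN ip N (opsub B C)) / 2 by lra.
  apply: (wN_le hB) => t.
  have eq : opadd (opRe ip (opscale (expi t) (opadd B C))) (opRe ip (opscale (expi t) (opsub B C)))
      = opscale 2 (opRe ip (opscale (expi t) B)).
    apply: funext => x.
    rewrite /opRe (adj_scale hH _ bP) (adj_scale hH _ bQ) (adj_scale hH _ hB).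
    rewrite (adj_add hH hB hC) (adj_sub hH hB hC) /opadd /opscale /opsub.
    exact: re_comb.
  have bRe X : bounded_op ip X -> bounded_op ip (opRe ip (opscale (expi t) X)).
    by move=> bX; apply: (bnd_Re hH); apply: (bnd_scale hH).
  have h := N_triangle hN (bRe _ bP) (bRe _ bQ).
  rewrite eq (N_homog hN) ?Renorm_two in h; last by apply: bRe.
  have := wN_ub hH hN t bP; have := wN_ub hH hN t bQ; lra.
have hCm : 2 * wN ip N C <= wN ip N (opadd B C) + wN ip N (opsub B C).
  suff : wN ip N C <= (wN ip N (opadd B C) + wN ip N (opsub B C)) / 2 by lra.
  apply: (wN_le hC) => t.
  have eq : opsub (opRe ip (opscale (expi t) (opadd B C))) (opRe ip (opscale (expi t) (opsub B C)))
      = opscale 2 (opRe ip (opscale (expi t) C)).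
    apply: funext => x.
    rewrite /opRe (adj_scale hH _ bP) (adj_scale hH _ bQ) (adj_scale hH _ hC).
    rewrite (adj_add hH hB hC) (adj_sub hH hB hC) /opadd /opscale /opsub.
    exact: re_comb'.
  have bRe X : bounded_op ip X -> bounded_op ip (opRe ip (opscale (expi t) X)).
    by move=> bX; apply: (bnd_Re hH); apply: (bnd_scale hH).
  have h := N_sub hH hN (bRe _ bP) (bRe _ bQ).
  rewrite eq (N_homog hN) ?Renorm_two in h; last by apply: bRe.
  have := wN_ub hH hN t bP; have := wN_ub hH hN t bQ; lra.
pose s := Num.sqrt (2 : R).
have s0 : 0 < s by rewrite sqrtr_gt0.
have s2 : s ^+ 2 = 2 by rewrite sqr_sqrtr.
pose c := ((s^-1)%:C)%C.
have Rc : complex.Re `|c| = s^-1 by rewrite RenormC ger0_norm // invr_ge0 ltW.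
have hc : `|c| ^+ 2 + `|c| ^+ 2 <= 1.
  rewrite (normC_Re c) Rc realC_sqr realC_add -realC1 lecR exprVn s2; lra.
have hc' : `|c| ^+ 2 + `|- c| ^+ 2 <= 1 by rewrite normrN.
have key X l2 : bounded_op ip X ->
    opadd (opscale c B) (opscale l2 C) = opscale c X ->
    `|c| ^+ 2 + `|l2| ^+ 2 <= 1 ->
    wN ip N X <= s * wNe ip N B C.
  move=> bX eX hl; apply: (wN_le bX) => t.
  have h := @wNe_elem R H ip hH N hN B C c l2 t hB hC hl.
  rewrite eX opscaleC (opRe_real hH) in h; last by apply: (bnd_scale hH).
  rewrite (N_homog hN) ?Rc in h; last by apply: (bnd_Re hH); apply: (bnd_scale hH).
  by rewrite ler_pdivrMl in h.
have ha := key _ _ bP (_ : _ = _) hc.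
have hb := key _ _ bQ (_ : _ = _) hc'.
apply: (@final_arith R _ _ _ (wNe ip N B C) _ _ s) => //; first exact: ltW.
- apply: ha; apply: funext => x; by rewrite /opadd /opscale scalerDr.
- apply: hb; apply: funext => x; by rewrite /opadd /opscale /opsub scaleNr scalerBr.
Qed.
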